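(* Let $g\ge1$ and $n\ge3$. Let $H$ be a group and $\lambda:B_n(\Sigma_g)\to H$ a surjective homomorphism such that $\lambda(\iota_n(B_n))$ is isomorphic to $\mathbb{Z}$. Then there is an isomorphism $\iota:H\to B_n(\Sigma_g)/\Gamma_3(B_n(\Sigma_g))$ such that $\iota\circ\lambda$ sends each generator $\sigma_1,\dots,\sigma_{n-1},a_1,b_1,\dots,a_g,b_g$ of $B_n(\Sigma_g)$ to its class in $B_n(\Sigma_g)/\Gamma_3(B_n(\Sigma_g))$.
   Context: $\Sigma_g$: compact connected orientable surface of genus $g\ge1$ with one boundary component; $B_n(\Sigma_g)=\pi_1(F_n(\Sigma_g)/S_n)$; $\Gamma_1(G)=G$, $\Gamma_i(G)=[G,\Gamma_{i-1}(G)]$. $\iota_n:B_n\to B_n(\Sigma_g)$ is the (injective) homomorphism induced by an embedding of a disc in $\Sigma_g$; its image is the subgroup generated by $\sigma_1,\dots,\sigma_{n-1}$. $B_n(\Sigma_g)$ has the presentation with generators $\sigma_1,\dots,\sigma_{n-1},a_1,b_1,\dots,a_g,b_g$ and relations: $\sigma_i\sigma_j=\sigma_j\sigma_i$ for $|i-j|\ge2$; $\sigma_i\sigma_{i+1}\sigma_i=\sigma_{i+1}\sigma_i\sigma_{i+1}$ for $1\le i\le n-2$; $c\sigma_j=\sigma_jc$ for $c\in\{a_i,b_i\}$, $j\ge2$; $c\sigma_1c\sigma_1=\sigma_1c\sigma_1c$ for $c\in\{a_i,b_i\}$; $a_i\sigma_1b_i=\sigma_1b_i\sigma_1a_i\sigma_1$;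 $c_i(\sigma_1^{-1}c_j\sigma_1)=(\sigma_1^{-1}c_j\sigma_1)c_i$ for $c_i\in\{a_i,b_i\}$, $c_j\in\{a_j,b_j\}$, $1\le j<i\le g$. *)

(* Defs.v *)
From mathcomp Require Import all_boot.
From mathcomp Require Import ssrint.
Set Implicit Arguments. Unset Strict Implicit. Unset Printing Implicit Defensive.

Record group := Group {
  gcar :> Type;
  gmul : gcar -> gcar -> gcar;
  ginv : gcar -> gcar;
  gone : gcar;
  gmulA : forall x y z, gmul x (gmul y z) = gmul (gmul x y) z;
  gmul1 : forall x, gmul gone x = x;
  gmulV : forall x, gmul (ginv x) x = gone
}.

Section SetoidGroupNotions.
Variables (T : Type) (eqT : T -> T -> Prop) (mul : T -> T -> T)
          (inv : T -> T) (one : T).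

Definition commut (x y : T) : T := mul (mul (inv x) (inv y)) (mul x y).

Inductive gensub (S : T -> Prop) : T -> Prop :=
| gs_gen x : S x -> gensub S x
| gs_one : gensub S one
| gs_mul x y : gensub S x -> gensub S y -> gensub S (mul x y)
| gs_inv x : gensub S x -> gensub S (inv x)
| gs_eq x y : eqT x y -> gensub S x -> gensub S y.

Definition commsub (K : T -> Prop) : T -> Prop :=
  gensub (fun c => exists x k, K k /\ c = commut x k).

(* lower central series; lcs i = Gamma_i for i >= 1 (lcs 0 := G too) *)
Fixpoint lcs (i : nat) : T -> Prop :=
  match i with
  | 0 => fun _ => True
  | S j => match j with
           | 0 => fun _ => True
           | S _ => commsub (lcs j)
           end
  end.
End SetoidGroupNotions.

(* Generators (0-based): Sig i = sigma_{i+1} (i < n-1), Ga k = a_{k+1},    *)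
(* Gb k = b_{k+1} (k < g).                                                *)
Inductive sbgen (n g : nat) : Type :=
| Sig of 'I_n.-1
| Ga of 'I_g
| Gb of 'I_g.

(* a letter is a generator together with an exponent flag (true = inverse) *)
Definition sbword (n g : nat) := seq (sbgen n g * bool).

Definition lt1 n g (x : sbgen n g) : sbgen n g * bool := (x, false).
Definition lti n g (x : sbgen n g) : sbgen n g * bool := (x, true).

Definition wmul n g (u v : sbword n g) : sbword n g := u ++ v.
Definition winv n g (u : sbword n g) : sbword n g :=
  rev (map (fun l => (l.1, ~~ l.2)) u).
Definition wone n g : sbword n g := [::].

Definition surfgen n g (x : sbgen n g) (k : 'I_g) : Prop := x = Ga n k \/ x = Gb n k.

Inductive sbrel (n g : nat) : sbword n g -> sbword n g -> Prop :=
| r_far (i j : 'I_n.-1) : (i + 2 <= j)%N || (j + 2 <= i)%N ->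
    sbrel [:: lt1 (Sig g i); lt1 (Sig g j)] [:: lt1 (Sig g j); lt1 (Sig g i)]
| r_braid (i j : 'I_n.-1) : val j = (val i).+1 ->
    sbrel [:: lt1 (Sig g i); lt1 (Sig g j); lt1 (Sig g i)]
          [:: lt1 (Sig g j); lt1 (Sig g i); lt1 (Sig g j)]
| r_surf_comm (c : sbgen n g) (k : 'I_g) (j : 'I_n.-1) :
    surfgen c k -> (1 <= val j)%N ->
    sbrel [:: lt1 c; lt1 (Sig g j)] [:: lt1 (Sig g j); lt1 c]
| r_surf_sig1 (c : sbgen n g) (k : 'I_g) (s1 : 'I_n.-1) :
    surfgen c k -> val s1 = 0%N ->
    sbrel [:: lt1 c; lt1 (Sig g s1); lt1 c; lt1 (Sig g s1)]
          [:: lt1 (Sig g s1); lt1 c; lt1 (Sig g s1); lt1 c]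
| r_ab (k : 'I_g) (s1 : 'I_n.-1) : val s1 = 0%N ->
    sbrel [:: lt1 (Ga n k); lt1 (Sig g s1); lt1 (Gb n k)]
          [:: lt1 (Sig g s1); lt1 (Gb n k); lt1 (Sig g s1); lt1 (Ga n k);
              lt1 (Sig g s1)]
| r_mixed (ci cj : sbgen n g) (i j : 'I_g) (s1 : 'I_n.-1) :
    surfgen ci i -> surfgen cj j -> (val j < val i)%N -> val s1 = 0%N ->
    sbrel [:: lt1 ci; lti (Sig g s1); lt1 cj; lt1 (Sig g s1)]
          [:: lti (Sig g s1); lt1 cj; lt1 (Sig g s1); lt1 ci].

(* equality in B_n(Sigma_g): congruence on words generated by free
   cancellation and the defining relations *)
Inductive sbeq (n g : nat) : sbword n g -> sbword n g -> Prop :=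
| e_refl u : sbeq u u
| e_sym u v : sbeq u v -> sbeq v u
| e_trans u v w : sbeq u v -> sbeq v w -> sbeq u w
| e_ctx p q u v : sbeq u v -> sbeq (p ++ u ++ q) (p ++ v ++ q)
| e_cancel (x : sbgen n g) (b : bool) : sbeq [:: (x, b); (x, ~~ b)] [::]
| e_rel u v : sbrel u v -> sbeq u v.

Definition sbGamma n g (i : nat) : sbword n g -> Prop :=
  lcs (@sbeq n g) (@wmul n g) (@winv n g) (@wone n g) i.

Definition qeq3 n g (u v : sbword n g) : Prop :=
  sbGamma 3 (wmul u (winv v)).

(* the image iota_n(B_n) = subgroup generated by sigma_1, ..., sigma_{n-1} *)
Definition braid_image n g : sbword n g -> Prop :=
  gensub (@sbeq n g) (@wmul n g) (@winv n g) (@wone n g)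
         (fun w => exists i : 'I_n.-1, w = [:: lt1 (Sig g i)]).

Definition surj_hom n g (H : group) (lam : sbword n g -> H) : Prop :=
  (forall u v, sbeq u v -> lam u = lam v) /\
  (forall u v, lam (wmul u v) = gmul (lam u) (lam v)) /\
  (forall h : H, exists w, lam w = h).

Definition subgroup_iso_Z (H : group) (P : H -> Prop) : Prop :=
  exists phi : int -> H,
    (forall a b : int, phi (a + b)%R = gmul (phi a) (phi b)) /\
    (forall a b : int, phi a = phi b -> a = b) /\
    (forall h : H, P h <-> exists z, phi z = h).

(* Main.v *)
Require Import Defs.
From mathcomp Require Import all_boot.
From mathcomp Require Import ssrint.
From mathcomp Require Import ssralg zify.
From Stdlib Require Import FunctionalExtensionality PropExtensionality ProofIrrelevance ClassicalEpsilon.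
Set Implicit Arguments. Unset Strict Implicit. Unset Printing Implicit Defensive.
Import GRing.Theory.

Local Notation "x ** y" := (gmul x y) (at level 40, left associativity).


Section GroupBasics.
Variable K : group.
Implicit Types x y : K.
Local Notation e := (gone K).

Lemma mulgV x : x ** ginv x = e.
Proof.
have h1 : x ** ginv x = ginv (x ** ginv x) ** (x ** ginv x) ** (x ** ginv x).
  by rewrite gmulV gmul1.
rewrite h1 -!gmulA (gmulA (ginv x) x) gmulV gmul1 gmulV //.
Qed.
Lemma mulg1 x : x ** e = x.
Proof. by rewrite -(gmulV x) gmulA mulgV gmul1. Qed.
Lemma cancl (a : K) x y : a ** x = a ** y -> x = y.
Proof. by move=> h; rewrite -(gmul1 x) -(gmul1 y) -(gmulV a) -!gmulA h. Qed.
Lemma cancr (a : K) x y : x ** a = y ** a -> x = y.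
Proof. by move=> h; rewrite -(mulg1 x) -(mulg1 y) -(mulgV a) !gmulA h. Qed.
Lemma inv_uniq (a b : K) : a ** b = e -> a = ginv b.
Proof. by move=> h; apply: (cancr (a:=b)); rewrite h gmulV. Qed.
Lemma invK x : ginv (ginv x) = x.
Proof. by symmetry; apply: inv_uniq; rewrite mulgV. Qed.
Lemma invM x y : ginv (x ** y) = ginv y ** ginv x.
Proof. by symmetry; apply: inv_uniq; rewrite -gmulA (gmulA (ginv x)) gmulV gmul1 gmulV. Qed.
Lemma inv1 : ginv e = e.
Proof. by symmetry; apply: inv_uniq; rewrite gmul1. Qed.
Lemma mulKg x y : ginv x ** (x ** y) = y.
Proof. by rewrite gmulA gmulV gmul1. Qed.
Lemma mulVKg x y : x ** (ginv x ** y) = y.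
Proof. by rewrite gmulA mulgV gmul1. Qed.
Lemma mulgK x y : y ** x ** ginv x = y.
Proof. by rewrite -gmulA mulgV mulg1. Qed.
Lemma mulgVK x y : y ** ginv x ** x = y.
Proof. by rewrite -gmulA gmulV mulg1. Qed.

Definition com (x y : K) := x ** y = y ** x.
Definition central (c : K) := forall h, com c h.

Lemma com_sym x y : com x y -> com y x. Proof. by []. Qed.
Lemma com1 x : com x e. Proof. by rewrite /com gmul1 mulg1. Qed.
Lemma com_refl x : com x x. Proof. by []. Qed.
Lemma comM x y (z : K) : com x y -> com x z -> com x (y ** z).
Proof. by rewrite /com => h1 h2; rewrite gmulA h1 -gmulA h2 gmulA. Qed.
Lemma comV x y : com x y -> com x (ginv y).
Proof.
rewrite /com => h; apply: (cancr (a:=y)); by rewrite mulgVK -gmulA h mulKg.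
Qed.
Lemma central1 : central e. Proof. by move=> h; apply/com_sym/com1. Qed.
Lemma centralM (c d : K) : central c -> central d -> central (c ** d).
Proof. by move=> h1 h2 h; apply: com_sym; apply: comM; apply: com_sym. Qed.
Lemma centralV (c : K) : central c -> central (ginv c).
Proof. by move=> h1 h; apply: com_sym; apply: comV; apply: com_sym. Qed.

Definition cm x y := ginv x ** ginv y ** (x ** y).

Lemma cm_eq x y : x ** y = y ** x ** cm x y.
Proof. by rewrite /cm !gmulA mulgK mulgV gmul1. Qed.
Lemma cm_central_eq x y : central (cm x y) -> x ** y = y ** x ** cm x y.
Proof. by move=> _; apply: cm_eq. Qed.

Lemma cm1_com x c : cm x c = e -> com x c.
Proof. by move=> h; rewrite /com cm_eq h mulg1. Qed.

Lemma cmM_r x y1 y2 : central (cm x y1) -> central (cm x y2) -> central (cm x (y1 ** y2)).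
Proof.
move=> h1 h2.
have -> : cm x (y1 ** y2) = cm x y2 ** cm x y1.
  have e1 : ginv y1 ** x ** y1 = x ** cm x y1 by rewrite /cm !gmulA mulgV gmul1.
  transitivity (ginv x ** ginv y2 ** (ginv y1 ** x ** y1) ** y2).
    by rewrite /cm invM !gmulA.
  rewrite e1; move: h1; set c1 := cm x y1; clearbody c1 => h1.
  rewrite !gmulA -(gmulA _ c1 y2) (h1 y2) !gmulA.
  by rewrite /cm !gmulA.
exact: centralM.
Qed.

Lemma cmV_r x y : central (cm x y) -> central (cm x (ginv y)).
Proof.
move=> h.
have E := cm_eq x y.
move: h E; set c := cm x y; clearbody c => h E.
have E2 : y ** x = x ** y ** ginv c by rewrite E mulgK.
have hv := centralV h.
have -> : cm x (ginv y) = ginv c.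
  rewrite /cm invK gmulA -(gmulA (ginv x)) E2 !gmulA gmulV gmul1.
  by rewrite -(gmulA y) (hv (ginv y)) gmulA mulgV gmul1.
exact: hv.
Qed.

Lemma cm_sym x y : central (cm x y) -> central (cm y x).
Proof.
move=> h.
have -> : cm y x = ginv (cm x y).
  by apply: inv_uniq; rewrite /cm !gmulA mulgK mulgK mulgVK gmulV.
exact: centralV.
Qed.

Fixpoint gpown x (m : nat) : K := if m is m'.+1 then x ** gpown x m' else e.
Definition gpow x (z : int) : K :=
  match z with Posz m => gpown x m | Negz m => gpown (ginv x) m.+1 end.

Lemma gpown_com x m : com x (gpown x m).
Proof. elim: m => [|m IH] /=; [exact: com1| exact: comM]. Qed.

Lemma int_ind3 (P : int -> Prop) : P 0%R -> (forall z, P z -> P (z + 1)%R) ->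
  (forall z, P z -> P (z - 1)%R) -> forall z, P z.
Proof.
move=> h0 hS hP; case=> m.
  elim: m => // m IH; have E : Posz m.+1 = (Posz m + 1)%R by lia.
  by rewrite E; exact: hS.
elim: m => [|m IH].
  have E : Negz 0 = (0 - 1)%R by lia.
  by rewrite E; exact: hP.
have E : Negz m.+1 = (Negz m - 1)%R by lia.
by rewrite E; exact: hP.
Qed.

Lemma gpow0 x : gpow x 0 = e. Proof. by []. Qed.
Lemma gpow1 x : gpow x 1 = x. Proof. by rewrite /= mulg1. Qed.

Lemma gpowS x (z : int) : gpow x (z + 1)%R = gpow x z ** x.
Proof.
case: z => m.
  have -> : (Posz m + 1)%R = Posz m.+1 by lia.
  by rewrite /= (gpown_com x m).
case: m => [|m].
  have -> : (Negz 0 + 1)%R = Posz 0 by lia.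
  by rewrite /= mulg1 gmulV.
have -> : (Negz m.+1 + 1)%R = Negz m by lia.
rewrite [gpow x (Negz m.+1)]/= .
have -> : ginv x ** (ginv x ** gpown (ginv x) m) = (ginv x ** gpown (ginv x) m) ** ginv x.
  by rewrite (gpown_com (ginv x) m.+1).
by rewrite mulgVK.
Qed.

Lemma gpowP x (z : int) : gpow x (z - 1)%R = gpow x z ** ginv x.
Proof.
have := gpowS x (z - 1)%R. have -> : (z - 1 + 1)%R = z by lia.
by move=> ->; rewrite mulgK.
Qed.

Lemma gpowD x (a b : int) : gpow x (a + b)%R = gpow x a ** gpow x b.
Proof.
elim/int_ind3: b => [|b IH|b IH].
- by rewrite addr0 gpow0 mulg1.
- by rewrite addrA !gpowS IH gmulA.
- have -> : (a + (b - 1))%R = (a + b - 1)%R by lia.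
  by rewrite !gpowP IH gmulA.
Qed.

Lemma gpow_com x y (z : int) : com x y -> com (gpow x z) y.
Proof.
move=> h; elim/int_ind3: z => [|z IH|z IH].
- exact: com_sym (com1 y).
- rewrite gpowS; apply: com_sym; apply: comM; exact: com_sym.
- rewrite gpowP; apply: com_sym; apply: comM; first exact: com_sym.
  by apply: comV; apply: com_sym.
Qed.

Lemma gpow_central (c : K) (z : int) : central c -> central (gpow c z).
Proof. by move=> h y; apply: gpow_com. Qed.

Lemma gpow_gpow x (a z : int) : gpow (gpow x a) z = gpow x (a * z)%R.
Proof.
elim/int_ind3: z => [|z IH|z IH].
- by rewrite mulr0.
- by rewrite gpowS IH -gpowD mulrDr mulr1.
- have -> : (a * (z - 1) = a * z + (- a))%R by rewrite mulrBr mulr1.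
  rewrite gpowP IH gpowD; congr (_ ** _); symmetry; apply: inv_uniq; rewrite -gpowD addNr //.
Qed.

Lemma gpow_twist x y (c : K) (z : int) : central c -> y ** x = x ** y ** c ->
  y ** gpow x z = gpow x z ** y ** gpow c z.
Proof.
move=> hc h.
have h1 : ginv x ** y = y ** ginv x ** c.
  apply: (cancr (a:=x)); rewrite -(gmulA _ y x) h !gmulA gmulV gmul1.
  by rewrite -(gmulA _ c x) (hc x) gmulA mulgVK.
have h' : y ** ginv x = ginv x ** y ** ginv c.
  by apply: (cancr (a:=c)); rewrite mulgVK h1.
elim/int_ind3: z => [|z IH|z IH].
- by rewrite !gpow0 gmul1 !mulg1.
- rewrite !gpowS gmulA IH -!gmulA; congr (_ ** _).
  by rewrite (gpow_central z hc x) gmulA h -!gmulA (hc (gpow c z)).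
- rewrite !gpowP gmulA IH -!gmulA; congr (_ ** _).
  by rewrite (gpow_central z hc (ginv x)) gmulA h' -!gmulA (centralV hc (gpow c z)).
Qed.

End GroupBasics.

Section Words.
Variables n g : nat.
Local Notation W := (sbword n g).
Local Notation sbeq := (@sbeq n g).
Local Notation GS := (gensub sbeq (@wmul n g) (@winv n g) (@wone n g)).

Lemma winv_cat (u v : W) : winv (u ++ v) = winv v ++ winv u.
Proof. by rewrite /winv map_cat rev_cat. Qed.
Lemma winvK (u : W) : winv (winv u) = u.
Proof.
rewrite /winv map_rev revK -map_comp.
by rewrite -[RHS]map_id; apply: eq_map => -[x b] /=; rewrite negbK.
Qed.
Lemma winv_cons (l : sbgen n g * bool) (u : W) : winv (l :: u) = winv u ++ [:: (l.1, ~~ l.2)].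
Proof. by rewrite /winv /= rev_cons cats1. Qed.

Lemma sbeq_cat (u u' v v' : W) : sbeq u u' -> sbeq v v' -> sbeq (u ++ v) (u' ++ v').
Proof.
move=> h1 h2; apply: e_trans (_ : sbeq (u' ++ v) _).
  by have := e_ctx [::] v h1.
by have := e_ctx u' [::] h2; rewrite !cats0.
Qed.
Lemma sbeq_catl (p u v : W) : sbeq u v -> sbeq (p ++ u) (p ++ v).
Proof. by move=> h; apply: sbeq_cat => //; apply: e_refl. Qed.
Lemma sbeq_catr (p u v : W) : sbeq u v -> sbeq (u ++ p) (v ++ p).
Proof. by move=> h; apply: sbeq_cat => //; apply: e_refl. Qed.

Lemma sbeq_cancel_r (p : W) : sbeq (p ++ winv p) [::].
Proof.
elim: p => [|[x b] p IH] /=; first exact: e_refl.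
rewrite winv_cons /=.
apply: e_trans (_ : sbeq ((x, b) :: [:: (x, ~~ b)]) _); last exact: e_cancel.
have := sbeq_catl [:: (x, b)] (sbeq_catr [:: (x, ~~ b)] IH).
by rewrite /= -!catA.
Qed.
Lemma sbeq_cancel_l (p : W) : sbeq (winv p ++ p) [::].
Proof. by have := sbeq_cancel_r (winv p); rewrite winvK. Qed.

Lemma sbeq_drop (a b p : W) : sbeq (a ++ winv p ++ p ++ b) (a ++ b).
Proof.
have := sbeq_catl a (sbeq_catr b (sbeq_cancel_l p)). by rewrite -!catA.
Qed.
Lemma sbeq_drop' (a b p : W) : sbeq (a ++ p ++ winv p ++ b) (a ++ b).
Proof. by have := sbeq_drop a b (winv p); rewrite winvK. Qed.

Lemma GS_eq S (u v : W) : sbeq u v -> GS S u -> GS S v.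
Proof. move=> h1 h2; exact: gs_eq h1 h2. Qed.
Lemma GS_cat S (u v : W) : GS S u -> GS S v -> GS S (u ++ v).
Proof. move=> h1 h2; exact: (gs_mul h1 h2). Qed.
Lemma GS_inv S (u : W) : GS S u -> GS S (winv u).
Proof. move=> h1; exact: (gs_inv h1). Qed.
Lemma GS_nil S : GS S [::].
Proof. exact: gs_one. Qed.

Lemma GS_conj S : (forall p x, S x -> GS S (p ++ x ++ winv p)) ->
  forall p w, GS S w -> GS S (p ++ w ++ winv p).
Proof.
move=> hS p w; elim => {w} [x Sx| |x y _ IHx _ IHy|x _ IH|x y hxy _ IH].
- exact: hS.
- apply: GS_eq (GS_nil S); apply: e_sym; exact: sbeq_cancel_r.
- rewrite /wmul; apply: GS_eq (GS_cat IHx IHy).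
  have := sbeq_drop (p ++ x) (y ++ winv p) p. rewrite -!catA //.
- rewrite /winv; have := GS_inv IH. by rewrite !winv_cat winvK -!catA.
- apply: GS_eq IH; apply: sbeq_catl; exact: sbeq_catr.
Qed.

Definition wcomm (x k : W) : W := commut (@wmul n g) (@winv n g) x k.

Lemma wcomm_conj (p x k : W) :
  sbeq (wcomm (p ++ x ++ winv p) (p ++ k ++ winv p)) (p ++ wcomm x k ++ winv p).
Proof.
rewrite /wcomm /commut /wmul !winv_cat !winvK -!catA.
have h1 := sbeq_drop (p ++ winv x) (winv k ++ winv p ++ p ++ x ++ winv p ++ p ++ k ++ winv p) p.
have h2 := sbeq_drop (p ++ winv x ++ winv k) (x ++ winv p ++ p ++ k ++ winv p) p.
have h3 := sbeq_drop (p ++ winv x ++ winv k ++ x) (k ++ winv p) p.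
rewrite -!catA in h1 h2 h3.
exact: e_trans h1 (e_trans h2 h3).
Qed.

Definition S2 : W -> Prop := fun c => exists x k, (fun _ : W => True) k /\ c = wcomm x k.
Definition G2 := GS S2.
Definition S3 : W -> Prop := fun c => exists x k, G2 k /\ c = wcomm x k.
Definition G3 := GS S3.

Lemma G3E (w : W) : sbGamma 3 w <-> G3 w.
Proof. by []. Qed.

Lemma G2_conj p w : G2 w -> G2 (p ++ w ++ winv p).
Proof.
apply: GS_conj => q _ [x [k [_ ->]]].
apply: GS_eq (wcomm_conj q x k) _; apply: gs_gen; by exists (q ++ x ++ winv q), (q ++ k ++ winv q).
Qed.
Lemma G3_conj p w : G3 w -> G3 (p ++ w ++ winv p).
Proof.
apply: GS_conj => q _ [x [k [hk ->]]].
apply: GS_eq (wcomm_conj q x k) _; apply: gs_gen; exists (q ++ x ++ winv q), (q ++ k ++ winv q).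
by split => //; apply: G2_conj.
Qed.

Definition R3 (u v : W) := G3 (u ++ winv v).

Lemma R3_sbeq u v : sbeq u v -> R3 u v.
Proof.
move=> h; rewrite /R3; apply: GS_eq (GS_nil S3); apply: e_sym.
apply: e_trans (sbeq_catr _ h) _; exact: sbeq_cancel_r.
Qed.
Lemma R3_refl u : R3 u u. Proof. apply: R3_sbeq; exact: e_refl. Qed.
Lemma R3_sym u v : R3 u v -> R3 v u.
Proof. by move=> h; have := GS_inv h; rewrite /R3 winv_cat winvK. Qed.
Lemma R3_trans u v w : R3 u v -> R3 v w -> R3 u w.
Proof.
move=> h1 h2; have h := GS_cat h1 h2; rewrite -!catA in h.
apply: GS_eq h; exact: sbeq_drop.
Qed.
Lemma R3_mul a b c d : R3 a b -> R3 c d -> R3 (a ++ c) (b ++ d).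
Proof.
move=> h1 h2; have h3 := G3_conj b h2.
have h := GS_cat h1 h3; rewrite -!catA in h.
rewrite /R3 winv_cat -!catA; apply: GS_eq h; exact: sbeq_drop.
Qed.
Lemma R3_inv a b : R3 a b -> R3 (winv a) (winv b).
Proof.
move=> h; have := G3_conj (winv b) h; rewrite winvK -catA => h'.
have h2 := sbeq_drop (winv b ++ a) [::] b; rewrite -!catA !cats0 in h2.
by have := GS_inv (GS_eq h2 h'); rewrite /R3 !winv_cat !winvK.
Qed.

End Words.

Section Quot.
Variables (T : Type) (R : T -> T -> Prop) (mul : T -> T -> T) (inv : T -> T) (one : T).
Hypotheses (Rrefl : forall x, R x x) (Rsym : forall x y, R x y -> R y x)
  (Rtrans : forall x y z, R x y -> R y z -> R x z)
  (Rmul : forall a b c d, R a b -> R c d -> R (mul a c) (mul b d))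
  (Rinv : forall a b, R a b -> R (inv a) (inv b))
  (mA : forall x y z, R (mul x (mul y z)) (mul (mul x y) z))
  (m1 : forall x, R (mul one x) x) (mV : forall x, R (mul (inv x) x) one).

Definition Qc := {P : T -> Prop | exists w, P = R w}.
Definition qcls (w : T) : Qc := exist _ (R w) (ex_intro _ w erefl).
Definition qrep (q : Qc) : T := proj1_sig (constructive_indefinite_description _ (proj2_sig q)).

Lemma Qc_eq (a b : Qc) : proj1_sig a = proj1_sig b -> a = b.
Proof.
case: a => P p; case: b => P' p' /= E; subst P'. by rewrite (proof_irrelevance _ p p').
Qed.
Lemma qcls_eq u v : R u v -> qcls u = qcls v.
Proof.
move=> h; apply: Qc_eq => /=; apply: functional_extensionality => x.
apply: propositional_extensionality; split => h'; [exact: Rtrans (Rsym h) h'|exact: Rtrans h h'].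
Qed.
Lemma qcls_inj u v : qcls u = qcls v -> R u v.
Proof. by move=> /(congr1 (@proj1_sig _ _)) /= ->. Qed.
Lemma qrepK q : qcls (qrep q) = q.
Proof.
apply: Qc_eq; rewrite /qrep; case: (constructive_indefinite_description _ _) => w /= E.
by rewrite E.
Qed.
Lemma qsurj (q : Qc) : exists u, q = qcls u.
Proof. by exists (qrep q); rewrite qrepK. Qed.
Lemma qrepR u : R (qrep (qcls u)) u.
Proof. apply: qcls_inj; exact: qrepK. Qed.

Definition qmul (a b : Qc) : Qc := qcls (mul (qrep a) (qrep b)).
Definition qinv (a : Qc) : Qc := qcls (inv (qrep a)).
Definition qone : Qc := qcls one.

Lemma qmulE u v : qmul (qcls u) (qcls v) = qcls (mul u v).
Proof. apply: qcls_eq; apply: Rmul; exact: qrepR. Qed.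
Lemma qinvE u : qinv (qcls u) = qcls (inv u).
Proof. apply: qcls_eq; apply: Rinv; exact: qrepR. Qed.

Lemma qmulA a b c : qmul a (qmul b c) = qmul (qmul a b) c.
Proof.
have [u ->] := qsurj a; have [v ->] := qsurj b; have [w ->] := qsurj c.
rewrite !qmulE; apply: qcls_eq; exact: mA.
Qed.
Lemma qmul1 a : qmul qone a = a.
Proof. have [u ->] := qsurj a; rewrite qmulE; apply: qcls_eq; exact: m1. Qed.
Lemma qmulV a : qmul (qinv a) a = qone.
Proof. have [u ->] := qsurj a; rewrite qinvE qmulE; apply: qcls_eq; exact: mV. Qed.

Definition Qgroup : group := @Defs.Group Qc qmul qinv qone qmulA qmul1 qmulV.
End Quot.

Section G3quot.
Variables n g : nat.
Local Notation W := (sbword n g).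

Definition Gq : group := @Qgroup W (@R3 n g) (@wmul n g) (@winv n g) (@wone n g)
  (@R3_refl n g) (@R3_sym n g) (@R3_trans n g) (@R3_mul n g) (@R3_inv n g)
  (fun x y z => ltac:(rewrite /wmul catA; exact: R3_refl))
  (fun x => R3_refl x)
  (fun x => R3_sbeq (sbeq_cancel_l x)).

Definition clsG (w : W) : Gq := qcls (@R3 n g) w.

Lemma clsG_mul u v : clsG (u ++ v) = gmul (clsG u) (clsG v).
Proof. symmetry; exact: (qmulE (@R3_refl n g) (@R3_sym n g) (@R3_trans n g) (@R3_mul n g)). Qed.
Lemma clsG_eq u v : sbeq u v -> clsG u = clsG v.
Proof. move=> h; apply: (qcls_eq (@R3_sym n g) (@R3_trans n g)); exact: R3_sbeq. Qed.
Lemma clsG_inj u v : clsG u = clsG v -> R3 u v.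
Proof. exact: (qcls_inj (@R3_refl n g)). Qed.
Lemma clsG_surj (q : Gq) : exists u, clsG u = q.
Proof. have [u ->] := qsurj q. by exists u. Qed.
End G3quot.

Section Prod.
Variables (K : group) (I : eqType) (f : I -> K).
Definition addx (x : I -> int) (j : I) (d : int) : I -> int :=
  fun k => if k == j then (x k + d)%R else x k.
Definition Prod (r : seq I) (x : I -> int) : K :=
  foldr (fun k acc => gpow (f k) (x k) ** acc) (gone K) r.

Lemma Prod_ext r x x' : (forall k, k \in r -> x k = x' k) -> Prod r x = Prod r x'.
Proof.
elim: r => [|k r IH] //= h; rewrite h ?mem_head // IH // => k' hk.
by apply: h; rewrite in_cons hk orbT.
Qed.
Lemma Prod0 r : Prod r (fun _ => 0%R) = gone K.
Proof. by elim: r => [|k r IH] //=; rewrite IH gmul1. Qed.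

Lemma Prod_com r x (y : K) : (forall k, k \in r -> com y (f k)) -> com y (Prod r x).
Proof.
elim: r => [|k r IH] /= h; first exact: com1.
apply: comM; first by apply: com_sym; apply: gpow_com; apply: com_sym; apply: h; rewrite mem_head.
by apply: IH => k' hk; apply: h; rewrite in_cons hk orbT.
Qed.

Lemma Prod_add r x j : j \in r -> uniq r -> (forall k, k \in r -> com (f j) (f k)) ->
  f j ** Prod r x = Prod r (addx x j 1).
Proof.
elim: r => [|k r IH] //= hj /andP [hk hu] hc.
case: (eqVneq k j) => [E|ne].
- subst k; rewrite /addx eqxx gpowS gmulA.
  rewrite -(gpow_com (x j) (com_refl (f j))); congr (_ ** _).
  apply: Prod_ext => k' hk'; rewrite /addx; case: eqP => // E; subst k'.
  by rewrite hk' in hk.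
- have hjr : j \in r by move: hj; rewrite in_cons eq_sym (negbTE ne).
  rewrite gmulA -(gpow_com (x k) (com_sym (hc k (mem_head _ _)))) -gmulA IH //.
  + by rewrite /addx (negbTE ne).
  + by move=> k' hk'; apply: hc; rewrite in_cons hk' orbT.
Qed.

Lemma Prod_twist r x j (y c : K) : j \in r -> uniq r ->
  (forall k, k \in r -> k != j -> com y (f k)) -> central c ->
  y ** f j = f j ** y ** c ->
  y ** Prod r x = Prod r x ** y ** gpow c (x j).
Proof.
elim: r => [|k r IH] //= hj /andP [hk hu] hc hcc hyj.
case: (eqVneq k j) => [E|ne].
- subst k.
  have hcr : com y (Prod r x).
    apply: Prod_com => k' hk'; apply: hc; first by rewrite in_cons hk' orbT.
    by apply/eqP => E; subst k'; rewrite hk' in hk.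
  rewrite gmulA (gpow_twist (x j) hcc hyj) -!gmulA; congr (_ ** _).
  rewrite (gpow_central (x j) hcc) gmulA hcr -gmulA //.
- have hjr : j \in r by move: hj; rewrite in_cons eq_sym (negbTE ne).
  rewrite gmulA -(gpow_com (x k) (com_sym (hc k (mem_head _ _) ne))) -gmulA IH //.
  + by rewrite !gmulA.
  + by move=> k' hk' ne'; apply: hc => //; rewrite in_cons hk' orbT.
Qed.
End Prod.

Section Act.
Variables n g : nat.
Definition Mt := (('I_g -> int) * ('I_g -> int) * int)%type.
Definition m0 : Mt := (fun _ => 0%R, fun _ => 0%R, 0%R).
Definition act (l : sbgen n g * bool) (m : Mt) : Mt :=
  let: (x, y, z) := m in
  match l with
  | (Sig _, false) => (x, y, (z + 1)%R)
  | (Sig _, true) => (x, y, (z - 1)%R)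
  | (Ga j, false) => (addx x j 1, y, z)
  | (Ga j, true) => (addx x j (-1), y, z)
  | (Gb j, false) => (x, addx y j 1, (-2 * x j + z)%R)
  | (Gb j, true) => (x, addx y j (-1), (2 * x j + z)%R)
  end.
Definition phi (w : sbword n g) : Mt := foldr act m0 w.

Lemma addxK (x : 'I_g -> int) j : addx (addx x j (-1)) j 1 = x.
Proof.
apply: functional_extensionality => k; rewrite /addx; case: eqP => // _.
lia.
Qed.
Lemma act_inv (c : sbgen n g) m : act (c, false) (act (c, true) m) = m.
Proof.
case: m => [[x y] z]; case: c => [i|j|j] /=.
- congr (_, _); lia.
- by rewrite addxK.
- rewrite addxK; congr (_, _); lia.
Qed.
End Act.

Section Hom.
Variables (n g : nat) (K : group) (lam : sbword n g -> K).
Hypotheses (lam_eq : forall u v, sbeq u v -> lam u = lam v)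
  (lam_mul : forall u v, lam (u ++ v) = lam u ** lam v).

Lemma lam_nil : lam [::] = gone K.
Proof.
have h : lam [::] ** lam [::] = lam [::] ** gone K by rewrite -lam_mul mulg1.
exact: cancl h.
Qed.
Lemma lam_cons l w : lam (l :: w) = lam [:: l] ** lam w.
Proof. by rewrite -lam_mul. Qed.
Lemma lam_list w : lam w = foldr (fun l acc => lam [:: l] ** acc) (gone K) w.
Proof. elim: w => [|l w IH] /=; [exact: lam_nil| by rewrite lam_cons IH]. Qed.
Lemma lam_winv w : lam (winv w) = ginv (lam w).
Proof.
apply: inv_uniq; rewrite -lam_mul -lam_nil; apply: lam_eq; exact: sbeq_cancel_l.
Qed.
Lemma lam_letter_inv x : lam [:: (x, true)] = ginv (lam [:: (x, false)]).
Proof. by have := lam_winv [:: (x, false)]; rewrite /winv /=. Qed.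
Lemma lam_wcomm u v : lam (wcomm u v) = cm (lam u) (lam v).
Proof. by rewrite /wcomm /commut /wmul !lam_mul !lam_winv. Qed.

Lemma lam_GS (S : sbword n g -> Prop) (P : K -> Prop) :
  (forall x, S x -> P (lam x)) -> P (gone K) ->
  (forall a b, P a -> P b -> P (a ** b)) -> (forall a, P a -> P (ginv a)) ->
  forall w, gensub (@sbeq n g) (@wmul n g) (@winv n g) (@wone n g) S w -> P (lam w).
Proof.
move=> hS h1 hM hV w; elim => {w} [x Sx| |x y _ IHx _ IHy|x _ IH|x y hxy _ IH].
- exact: hS.
- by rewrite /wone lam_nil.
- by rewrite /wmul lam_mul; apply: hM.
- by rewrite lam_winv; apply: hV.
- by rewrite -(lam_eq hxy).
Qed.

Definition lc (c : sbgen n g) := lam [:: lt1 c].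
Definition lS (i : 'I_n.-1) := lc (Sig g i).

Lemma rel_braid (i j : 'I_n.-1) : val j = (val i).+1 ->
  lS i ** (lS j ** lS i) = lS j ** (lS i ** lS j).
Proof.
move=> h; have := lam_eq (e_rel (r_braid g h)); rewrite !lam_list /= !mulg1 //.
Qed.
Lemma rel_comm (c : sbgen n g) k (j : 'I_n.-1) : surfgen c k -> (1 <= val j)%N ->
  com (lc c) (lS j).
Proof.
move=> h1 h2; have := lam_eq (e_rel (r_surf_comm h1 h2)); rewrite !lam_list /= !mulg1 //.
Qed.
Lemma rel_ab k (s1 : 'I_n.-1) : val s1 = 0%N ->
  lc (Ga n k) ** (lS s1 ** lc (Gb n k)) =
  lS s1 ** (lc (Gb n k) ** (lS s1 ** (lc (Ga n k) ** lS s1))).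
Proof.
move=> h; have := lam_eq (e_rel (r_ab k h)); rewrite !lam_list /= !mulg1 //.
Qed.
Lemma rel_mixed (ci cj : sbgen n g) i j (s1 : 'I_n.-1) :
  surfgen ci i -> surfgen cj j -> (val j < val i)%N -> val s1 = 0%N ->
  lc ci ** (ginv (lS s1) ** (lc cj ** lS s1)) =
  ginv (lS s1) ** (lc cj ** (lS s1 ** lc ci)).
Proof.
move=> h1 h2 h3 h4; have := lam_eq (e_rel (r_mixed h1 h2 h3 h4)).
rewrite !lam_list /= !mulg1 /lS /lc /lti lam_letter_inv //.
Qed.

Variable s : K.
Hypothesis hsig : forall i, lS i = s.
Hypothesis hcent : central s.
Variable i0 : 'I_n.-1.
Hypothesis hi0 : val i0 = 0%N.

Definition gA k := lc (Ga n k).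
Definition gB k := lc (Gb n k).

Lemma csw (c X Y : K) : central c -> X ** (c ** Y) = c ** (X ** Y).
Proof. by move=> h; rewrite gmulA -(h X) -gmulA. Qed.
Lemma ccancel (c X : K) : central c -> c ** X ** ginv c = X.
Proof. by move=> h; rewrite (h X) mulgK. Qed.

Lemma gpowm2 (x : K) : gpow x (-2)%R = ginv x ** ginv x.
Proof. by rewrite /= mulg1. Qed.

Lemma hBA k : gB k ** gA k = gA k ** gB k ** gpow s (-2)%R.
Proof.
have := rel_ab k hi0; rewrite !hsig -/(gA k) -/(gB k) -(hcent (gA k)) !(csw _ _ hcent).
move/cancl => E.
rewrite gpowm2 E; move: (gB k ** gA k) => Z.
by rewrite gmulA !ccancel.
Qed.

Lemma hcomm_lt (ci cj : sbgen n g) i j : surfgen ci i -> surfgen cj j ->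
  (val j < val i)%N -> com (lc ci) (lc cj).
Proof.
move=> h1 h2 h3; have := rel_mixed h1 h2 h3 hi0; rewrite !hsig.
rewrite -(hcent (lc cj)) (gmulA (ginv s)) gmulV gmul1.
rewrite (csw _ _ hcent) (gmulA (ginv s)) gmulV gmul1 //.
Qed.
Lemma hcomm (ci cj : sbgen n g) i j : surfgen ci i -> surfgen cj j ->
  i != j -> com (lc ci) (lc cj).
Proof.
move=> h1 h2 h3; case: (ltngtP (val i) (val j)) => h.
- exact: com_sym (hcomm_lt h2 h1 h).
- exact: hcomm_lt h1 h2 h.
- by move: h3; rewrite (val_inj h) eqxx.
Qed.

Lemma comAA i j : com (gA i) (gA j).
Proof.
case: (eqVneq i j) => [->|h]; first exact: com_refl.
by apply: (hcomm (i:=i) (j:=j)) => //; left.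
Qed.
Lemma comBB i j : com (gB i) (gB j).
Proof.
case: (eqVneq i j) => [->|h]; first exact: com_refl.
by apply: (hcomm (i:=i) (j:=j)) => //; right.
Qed.
Lemma comAB i j : i != j -> com (gA i) (gB j).
Proof. by move=> h; apply: (hcomm (i:=i) (j:=j)) => //; [left|right]. Qed.

Lemma hAB k : gA k ** gB k = gB k ** gA k ** gpow s 2%R.
Proof.
rewrite hBA -gmulA -gpowD.
have -> : (-2 + 2 = 0 :> int)%R by []. by rewrite mulg1.
Qed.


Local Notation r := (enum 'I_g).
Definition Psi (m : Mt g) : K := Prod gA r m.1.1 ** Prod gB r m.1.2 ** gpow s m.2.

Lemma PA_A j x : gA j ** Prod gA r x = Prod gA r (addx x j 1).
Proof. apply: Prod_add; [by rewrite mem_enum|exact: enum_uniq|move=> k _; exact: comAA]. Qed.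
Lemma PB_B j y : gB j ** Prod gB r y = Prod gB r (addx y j 1).
Proof. apply: Prod_add; [by rewrite mem_enum|exact: enum_uniq|move=> k _; exact: comBB]. Qed.
Lemma PA_B j x : gB j ** Prod gA r x = Prod gA r x ** gB j ** gpow (gpow s (-2)%R) (x j).
Proof.
apply: Prod_twist; [by rewrite mem_enum|exact: enum_uniq| |exact: gpow_central|exact: hBA].
by move=> k _ ne; apply: com_sym; apply: comAB.
Qed.
Lemma PB_A j y : gA j ** Prod gB r y = Prod gB r y ** gA j ** gpow (gpow s 2%R) (y j).
Proof.
apply: Prod_twist; [by rewrite mem_enum|exact: enum_uniq| |exact: gpow_central|exact: hAB].
by move=> k _ ne; apply: comAB; rewrite eq_sym.
Qed.
Lemma PA_comA j x : com (gA j) (Prod gA r x).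
Proof. by apply: Prod_com => k _; apply: comAA. Qed.
Lemma PB_comB j y : com (gB j) (Prod gB r y).
Proof. by apply: Prod_com => k _; apply: comBB. Qed.

Lemma Psi_act_pos (c : sbgen n g) m : lam [:: (c, false)] ** Psi m = Psi (act (c, false) m).
Proof.
case: m => [[x y] z]; rewrite /Psi; case: c => [i|j|j] /=.
- have -> : lam [:: (Sig g i, false)] = s by exact: hsig i.
  by rewrite hcent gpowS !gmulA.
- have -> : lam [:: (Ga n j, false)] = gA j by [].
  by rewrite !gmulA PA_A.
- have -> : lam [:: (Gb n j, false)] = gB j by [].
  rewrite !gmulA PA_B -(gmulA _ (gpow _ _) (Prod gB r y)).
  rewrite (gpow_central _ (gpow_central _ hcent)) gmulA -(gmulA _ (gB j)) PB_B.
  by rewrite -gmulA gpow_gpow -gpowD.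
Qed.

Lemma Psi_act l m : lam [:: l] ** Psi m = Psi (act l m).
Proof.
case: l => c [|]; last exact: Psi_act_pos.
rewrite lam_letter_inv; apply: (cancl (a := lam [:: (c, false)])).
by rewrite mulVKg Psi_act_pos act_inv.
Qed.

Lemma Psi_phi w : lam w = Psi (phi w).
Proof.
elim: w => [|l w IH] /=.
  by rewrite lam_nil /Psi /= !Prod0 !gmul1.
by rewrite lam_cons IH Psi_act.
Qed.

Lemma Psi_twistB j m : gB j ** Psi m = Psi m ** gB j ** gpow s (-2 * m.1.1 j)%R.
Proof.
case: m => [[x y] z]; rewrite /Psi /=.
rewrite !gmulA PA_B -(gmulA _ (gpow _ _) (Prod gB r y)).
rewrite (gpow_central _ (gpow_central _ hcent)) gmulA -(gmulA _ (gB j)) (PB_comB j y).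
rewrite -!gmulA (gpow_central _ (gpow_central _ hcent)) gpow_gpow; congr (_ ** (_ ** _)).
by rewrite !gmulA (gpow_central _ hcent (gB j)).
Qed.
Lemma Psi_twistA j m : gA j ** Psi m = Psi m ** gA j ** gpow s (2 * m.1.2 j)%R.
Proof.
case: m => [[x y] z]; rewrite /Psi /=.
rewrite !gmulA (PA_comA j x) -(gmulA _ (gA j)) PB_A !gmulA.
rewrite -!gmulA (gpow_central _ (gpow_central _ hcent)) gpow_gpow; congr (_ ** (_ ** _)).
by rewrite !gmulA (gpow_central _ hcent (gA j)).
Qed.

Lemma cm_of_twist (x y c : K) : x ** y = y ** x ** c -> cm x y = c.
Proof. by move=> h; apply: (cancl (a := y ** x)); rewrite -cm_eq h. Qed.
Lemma cm_of_com (x y : K) : com x y -> cm x y = gone K.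
Proof. by move=> h; apply: cm_of_twist; rewrite mulg1. Qed.

Lemma letters_cm (c1 c2 : sbgen n g) : central (cm (lc c1) (lc c2)).
Proof.
have hs : forall i, lc (Sig g i) = s by move=> i; exact: hsig i.
case: c1 => [i|i|i]; first by rewrite hs cm_of_com; [exact: central1|exact: hcent].
- case: c2 => [j|j|j].
  + rewrite hs cm_of_com; [exact: central1|apply: com_sym; exact: hcent].
  + rewrite cm_of_com; [exact: central1|exact: comAA].
  + case: (eqVneq i j) => [->|ne].
    * rewrite (cm_of_twist (hAB j)); exact: gpow_central.
    * rewrite cm_of_com; [exact: central1|exact: comAB].
- case: c2 => [j|j|j].
  + rewrite hs cm_of_com; [exact: central1|apply: com_sym; exact: hcent].
  + case: (eqVneq i j) => [->|ne].
    * rewrite (cm_of_twist (hBA j)); exact: gpow_central.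
    * rewrite cm_of_com; [exact: central1|apply: com_sym; apply: comAB; by rewrite eq_sym].
  + rewrite cm_of_com; [exact: central1|exact: comBB].
Qed.

Lemma class2_words u v : central (cm (lam u) (lam v)).
Proof.
have step1 : forall c v, central (cm (lc c) (lam v)).
  move=> c; elim => [|[c2 b] w IH].
    rewrite lam_nil cm_of_com; [exact: central1|exact: com1].
  rewrite lam_cons; apply: cmM_r => //; case: b.
  - rewrite lam_letter_inv; apply: cmV_r; exact: letters_cm.
  - exact: letters_cm.
elim: u => [|[c b] w IH].
  rewrite lam_nil; apply: cm_sym; rewrite cm_of_com; [exact: central1|exact: com1].
rewrite lam_cons; apply: cm_sym; apply: cmM_r; apply: cm_sym => //; case: b.
- rewrite lam_letter_inv; apply: cm_sym; apply: cmV_r; exact: cm_sym (step1 c v).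
- exact: step1.
Qed.

Hypothesis hinf : forall z, gpow s z = gone K -> z = 0%R.

Lemma Psi_inj0 m : Psi m = gone K -> m = m0 g.
Proof.
move=> h.
have hx : forall j, m.1.1 j = 0%R.
  move=> j; have := Psi_twistB j m; rewrite h gmul1 => E.
  have := hinf (esym (cancl (E : gB j ** gone K = gB j ** _))). lia.
have hy : forall j, m.1.2 j = 0%R.
  move=> j; have := Psi_twistA j m; rewrite h gmul1 => E.
  have := hinf (esym (cancl (E : gA j ** gone K = gA j ** _))). lia.
move: h hx hy; case: m => [[x y] z] /= h hx hy.
have ex : x = (fun _ => 0%R) by apply: functional_extensionality.
have ey : y = (fun _ => 0%R) by apply: functional_extensionality.
subst x y; move: h; rewrite /Psi /= !Prod0 !gmul1 => /hinf -> //.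
Qed.

End Hom.

Lemma braid_eq (K : group) (x y : K) : x ** (y ** x) = y ** (x ** y) ->
  com x (ginv x ** y) -> x = y.
Proof.
move=> hb hc; move: hb hc; set k := ginv x ** y.
have -> : y = x ** k by rewrite /k mulVKg.
clearbody k => hb hc.
have L : x ** (x ** k ** x) = x ** x ** x ** k.
  by rewrite -(gmulA x k x) -hc !gmulA.
have R : x ** k ** (x ** (x ** k)) = x ** x ** x ** k ** k.
  by rewrite !gmulA -(gmulA x k x) -hc !gmulA -(gmulA (x ** x) k x) -hc !gmulA.
rewrite L R in hb.
have E : (x ** x ** x ** k) ** gone K = (x ** x ** x ** k) ** k by rewrite mulg1.
by rewrite -(cancl E) mulg1.
Qed.

Section Derive.
Variables (n g : nat) (K : group) (lam : sbword n g -> K).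
Hypotheses (lam_eq : forall u v, sbeq u v -> lam u = lam v)
  (lam_mul : forall u v, lam (u ++ v) = lam u ** lam v)
  (lam_surj : forall h, exists w, lam w = h).
Variables (i0 i1 : 'I_n.-1).
Hypotheses (hi0 : val i0 = 0%N) (hi1 : val i1 = 1%N).
Hypothesis hbr : forall i j : 'I_n.-1, val j = (val i).+1 -> com (lS lam i) (ginv (lS lam i) ** lS lam j).

Lemma hsig_all i : lS lam i = lS lam i0.
Proof.
case: i => m hm; elim: m hm => [|m IH] hm.
  by congr (lS lam _); apply: val_inj; rewrite /= hi0.
have hm' : (m < n.-1)%N by apply: ltnW.
rewrite -(IH hm'); symmetry; apply: braid_eq.
- by apply: (rel_braid lam_eq lam_mul (i:=Ordinal hm') (j:=Ordinal hm)).
- exact: (hbr (i:=Ordinal hm') (j:=Ordinal hm)).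
Qed.

Lemma hcent_s : central (lS lam i0).
Proof.
have hl : forall c, com (lS lam i0) (lc lam c).
  case=> [i|k|k].
  - by have -> : lc lam (Sig g i) = lS lam i by []; rewrite (hsig_all i).
  - rewrite -(hsig_all i1); apply: com_sym; apply: (rel_comm lam_eq lam_mul (k:=k)); first by left.
    by rewrite hi1.
  - rewrite -(hsig_all i1); apply: com_sym; apply: (rel_comm lam_eq lam_mul (k:=k)); first by right.
    by rewrite hi1.
have hw : forall w, com (lS lam i0) (lam w).
  elim => [|[c b] w IH]; first by rewrite (lam_nil lam_mul); exact: com1.
  rewrite (lam_cons lam_mul); apply: comM => //; case: b.
  - rewrite (lam_letter_inv lam_eq lam_mul); apply: comV; exact: hl.
  - exact: hl.
move=> h; have [w <-] := lam_surj h; exact: hw.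
Qed.
End Derive.

Lemma braid_cm (K : group) (x y : K) : x ** (y ** x) = y ** (x ** y) ->
  ginv x ** y = cm x (ginv (x ** y)).
Proof.
move=> hb; rewrite !gmulA in hb.
apply: (cancl (a := x)); rewrite mulVKg /cm invK invM !gmulA mulgV gmul1 hb.
by rewrite mulgK mulgK.
Qed.

Section GProps.
Variables n g : nat.
Local Notation G := (Gq n g).
Local Notation cl := (@clsG n g).

Lemma G_central (a b : G) : central (cm a b).
Proof.
have [u <-] := clsG_surj a; have [v <-] := clsG_surj b.
rewrite -(lam_wcomm (@clsG_eq n g) (@clsG_mul n g)) => h.
have [t <-] := clsG_surj h.
apply: com_sym; apply: cm1_com.
rewrite -(lam_wcomm (@clsG_eq n g) (@clsG_mul n g)).
have E : R3 (wcomm t (wcomm u v)) [::].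
  rewrite /R3 /= cats0; apply: gs_gen; exists t, (wcomm u v); split => //.
  by apply: gs_gen; exists u, v.
exact: (qcls_eq (@R3_sym n g) (@R3_trans n g) E).
Qed.
End GProps.

Lemma ph_pow (K : group) (ph : int -> K) (phD : forall a b, ph (a + b)%R = ph a ** ph b)
  (z0 z : int) : gpow (ph z0) z = ph (z0 * z)%R.
Proof.
have ph0 : ph 0%R = gone K.
  symmetry; apply: (cancl (a := ph 0%R)); by rewrite mulg1 -phD addr0.
elim/int_ind3: z => [|z IH|z IH].
- by rewrite mulr0 ph0.
- by rewrite gpowS IH -phD mulrDr mulr1.
- rewrite gpowP IH.
  have -> : ginv (ph z0) = ph (- z0)%R.
    by symmetry; apply: inv_uniq; rewrite -phD addNr.
  by rewrite -phD mulrBr mulr1.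
Qed.

Theorem mainTheorem10 (g n : nat) (hg : (1 <= g)%N) (hn : (3 <= n)%N)
  (H : group) (lam : sbword n g -> H) :
  surj_hom lam ->
  subgroup_iso_Z (fun h : H => exists w, braid_image w /\ lam w = h) ->
  exists iota : H -> sbword n g,
    (forall h h' : H, qeq3 (iota (gmul h h')) (wmul (iota h) (iota h'))) /\
    (forall h h' : H, qeq3 (iota h) (iota h') -> h = h') /\
    (forall w : sbword n g, exists h : H, qeq3 (iota h) w) /\
    (forall x : sbgen n g, qeq3 (iota (lam [:: lt1 x])) [:: lt1 x]).
Proof.
move=> [lam_eq [lam_mul0 lam_surj]] [ph [phD [phI phP]]].
have lam_mul : forall u v, lam (u ++ v) = lam u ** lam v by exact: lam_mul0.
have hn1 : (0 < n.-1)%N by move: hn; case: (n) => [|[|[|n0]]].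
have hn2 : (1 < n.-1)%N by move: hn; case: (n) => [|[|[|n0]]].
pose i0 : 'I_n.-1 := Ordinal hn1.
pose i1 : 'I_n.-1 := Ordinal hn2.
have hi0 : val i0 = 0%N by [].
have hi1 : val i1 = 1%N by [].
have inP : forall i, exists z, ph z = lS lam i.
  move=> i; apply/(phP _).1; exists [:: lt1 (Sig g i)]; split => //.
  by apply: gs_gen; exists i.
have comH : forall i j, com (lS lam i) (lS lam j).
  move=> i j; have [a <-] := inP i; have [b <-] := inP j.
  by rewrite /com -!phD addrC.
have hbrH : forall i j : 'I_n.-1, val j = (val i).+1 ->
    com (lS lam i) (ginv (lS lam i) ** lS lam j).
  by move=> i j _; apply: comM; [apply: comV; exact: com_refl|exact: comH].
have hsigH := hsig_all lam_eq lam_mul hi0 hbrH.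
have hcentH := hcent_s lam_eq lam_mul lam_surj hi0 hi1 hbrH.
set s := lS lam i0 in hsigH hcentH.
have ph0 : ph 0%R = gone H.
  symmetry; apply: (cancl (a := ph 0%R)); by rewrite mulg1 -phD addr0.
have hinfH : forall z, gpow s z = gone H -> z = 0%R.
  move=> z; have [z0 hz0] := inP i0; rewrite -/s in hz0.
  rewrite -hz0 ph_pow // -ph0 => /phI /eqP; rewrite mulf_eq0 => /orP [/eqP z00|/eqP //].
  exfalso.
  have hs1 : s = gone H by rewrite -hz0 z00.
  have hb : forall w, braid_image w -> lam w = gone H.
    move=> w; apply: (lam_GS lam_eq lam_mul (P := fun h => h = gone H)).
    - by move=> x [i ->]; rewrite -hs1 -(hsigH i).
    - by [].
    - by move=> a b -> ->; rewrite gmul1.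
    - by move=> a ->; rewrite inv1.
  have [w [bw hw]] : exists w, braid_image w /\ lam w = ph 1%R by apply/(phP _).2; exists 1%R.
  have := phI _ _ (etrans (esym hw) (etrans (hb w bw) (esym ph0))). by [].
have PsiH := Psi_phi lam_eq lam_mul hsigH hcentH hi0.
have PsiH0 := Psi_inj0 lam_eq lam_mul hsigH hcentH hi0 hinfH.
have clsG_mul' : forall u v : sbword n g, clsG (u ++ v) = clsG u ** clsG v := @clsG_mul n g.
have hbrG : forall i j : 'I_n.-1, val j = (val i).+1 ->
    com (lS (@clsG n g) i) (ginv (lS (@clsG n g) i) ** lS (@clsG n g) j).
  move=> i j h; rewrite (braid_cm (rel_braid (@clsG_eq n g) clsG_mul' h)).
  apply: com_sym; exact: G_central.
have hsigG := hsig_all (@clsG_eq n g) clsG_mul' hi0 hbrG.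
have hcentG := hcent_s (@clsG_eq n g) clsG_mul' (@clsG_surj n g) hi0 hi1 hbrG.
have PsiG := Psi_phi (@clsG_eq n g) clsG_mul' hsigG hcentG hi0.
have keyA : forall u v, lam u = lam v -> qeq3 u v.
  move=> u v huv.
  have h1 : lam (u ++ winv v) = gone H
    by rewrite lam_mul (lam_winv lam_eq lam_mul) huv mulgV.
  rewrite PsiH in h1; have h2 := PsiH0 _ h1.
  have h3 : clsG (u ++ winv v) = clsG [::] by rewrite !PsiG h2.
  have := clsG_inj h3; rewrite /R3 /= cats0 //.
have keyB : forall w, G3 w -> lam w = gone H.
  apply: (lam_GS lam_eq lam_mul (P := fun h => h = gone H)).
  - move=> c [x [k [hk ->]]]; rewrite (lam_wcomm lam_eq lam_mul).
    have hc : central (lam k).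
      apply: (lam_GS lam_eq lam_mul (P := central (K := H)) (S := @S2 n g)) hk.
      + move=> c' [x' [k' [_ ->]]]; rewrite (lam_wcomm lam_eq lam_mul).
        exact: (class2_words lam_eq lam_mul hsigH hcentH hi0).
      + exact: central1.
      + by move=> a b; apply: centralM.
      + by move=> a; apply: centralV.
    apply: cm_of_com; exact: com_sym (hc (lam x)).
  - by [].
  - by move=> a b -> ->; rewrite gmul1.
  - by move=> a ->; rewrite inv1.
pose iota (h : H) : sbword n g := proj1_sig (constructive_indefinite_description _ (lam_surj h)).
have iotaK : forall h, lam (iota h) = h.
  by move=> h; rewrite /iota; case: (constructive_indefinite_description _ _).
exists iota; split; [|split; [|split]].
- move=> h h'; apply: keyA; rewrite /wmul lam_mul !iotaK //.
- move=> h h' hq; have := keyB _ hq; rewrite /wmul lam_mul (lam_winv lam_eq lam_mul) !iotaK.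
  by move/inv_uniq; rewrite invK.
- by move=> w; exists (lam w); apply: keyA; rewrite iotaK.
- by move=> x; apply: keyA; rewrite iotaK.
Qed.
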